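(* Let $x_0<\dots<x_n$ and $\hat x_0<\dots<\hat x_n$ be real numbers with $\hat x_0=x_0$, $\hat x_n=x_n$, let $\mathbf{y}\in\mathbb{R}^{n+1}$, $z_k=z_k(\mathbf{x},\hat{\mathbf{x}})$, $\hat c_k:=(\hat x_{k-1}+\hat x_k)/2$ for $1\le k\le n$, and $\hat{\mathbf{v}}:=\{\hat x_k:0\le k\le n\}\cup\{\hat c_k:1\le k\le n\}$. Then \[ \max_{x_0\le t\le x_n}|E(t;\mathbf{y},\mathbf{z})|\le\Lambda(\hat{\mathbf{v}})\max_{1\le k\le n}|E(\hat c_k;\mathbf{y},\mathbf{z})|. \]
   Context: $\lambda_k(\mathbf{x}):=1/\prod_{j\neq k}(x_k-x_j)$; $z_k(\mathbf{x},\hat{\mathbf{x}}):=(\lambda_k(\mathbf{x})-\lambda_k(\hat{\mathbf{x}}))/\lambda_k(\hat{\mathbf{x}})$. For $\mathbf{v}\in\mathbb{R}^{n+1}$, $P_{\mathbf{v}}$ is the polynomial of degree $\le n$ with $P_{\mathbf{v}}(\hat x_k)=v_k$; $E(t;\mathbf{y},\mathbf{z}):=P_{\mathbf{y}\mathbf{z}}(t)-P_{\mathbf{y}}(t)P_{\mathbf{z}}(t)$ with $(\mathbf{yz})_k=y_kz_k$. For a finite set of distinct points $\mathbf{u}\subset[x_0,x_n]$, $\Lambda(\mathbf{u}):=\max_{t\in[x_0,x_n]}\sum_{u\in\mathbf{u}}|\ell_u(t)|$, where $\ell_u$ are the Lagrange polynomials for polynomial interpolation at the points of $\mathbf{u}$.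 *)

(* Defs.v *)
From HB Require Import structures.
From mathcomp Require Import all_boot all_order all_algebra.
From mathcomp Require Import classical_sets reals.
Set Implicit Arguments. Unset Strict Implicit. Unset Printing Implicit Defensive.
Import Order.TTheory GRing.Theory Num.Theory.
Local Open Scope ring_scope.
Local Open Scope classical_set_scope.

Section Defs.
Variable R : realType.

Definition lam (n : nat) (x : 'I_n.+1 -> R) (k : 'I_n.+1) : R :=
  (\prod_(j < n.+1 | j != k) (x k - x j))^-1.

Definition zvec (n : nat) (x xh : 'I_n.+1 -> R) (k : 'I_n.+1) : R :=
  (lam x k - lam xh k) / lam xh k.

Definition Pint (n : nat) (xh : 'I_n.+1 -> R) (v : 'I_n.+1 -> R) (t : R) : R :=
  \sum_(k < n.+1) v k * \prod_(j < n.+1 | j != k) ((t - xh j) / (xh k - xh j)).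

Definition Eerr (n : nat) (xh y z : 'I_n.+1 -> R) (t : R) : R :=
  Pint xh (fun k => y k * z k) t - Pint xh y t * Pint xh z t.

Definition lagr (s : seq R) (u t : R) : R :=
  \prod_(w <- s | w != u) ((t - w) / (u - w)).

Definition Lebesgue (a b : R) (s : seq R) : R :=
  sup [set \sum_(u <- s) `|lagr s u t| | t in [set t : R | a <= t <= b]].

(* midpoints hat c_k = (xh_{k-1} + xh_k)/2 for k = 1..n, indexed by k-1 : 'I_n *)
Definition cmid (n : nat) (xh : 'I_n.+1 -> R) (k : 'I_n) : R :=
  (xh (inord k) + xh (inord k.+1)) / 2.

Definition vhat (n : nat) (xh : 'I_n.+1 -> R) : seq R :=
  [seq xh k | k <- enum 'I_n.+1] ++ [seq cmid xh k | k <- enum 'I_n].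

Definition strictly_incr (n : nat) (x : 'I_n.+1 -> R) : Prop :=
  forall i j : 'I_n.+1, (i < j)%N -> x i < x j.

End Defs.

(* Main.v *)
Require Import Defs.
From HB Require Import structures.
From mathcomp Require Import all_boot all_order all_algebra.
From mathcomp Require Import classical_sets reals.
From mathcomp Require Import zify ring lra.
Import Order.TTheory GRing.Theory Num.Theory.
Local Open Scope ring_scope.
Set Implicit Arguments. Unset Strict Implicit.

Section Aux.
Variable R : realType.

Definition LP (s : seq R) (u : R) : {poly R} :=
  (\prod_(w <- s | w != u) (u - w)^-1) *: \prod_(w <- s | w != u) ('X - w%:P).

Lemma LP_horner (s : seq R) (u t : R) : (LP s u).[t] = lagr s u t.
Proof.
rewrite /LP hornerZ horner_prod /lagr -big_split /=.
by apply: eq_bigr => w _; rewrite hornerXsubC mulrC.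
Qed.

Lemma size_LP (s : seq R) (u : R) : u \in s -> (size (LP s u) <= size s)%N.
Proof.
move=> us; apply: leq_trans (size_scale_leq _ _) _.
rewrite -big_filter size_prod_XsubC size_filter.
have := count_predC (pred1 u) s.
have : (0 < count (pred1 u) s)%N.
  by rewrite -has_count; apply/hasP; exists u => //=.
move=> h1 h2; rewrite -h2 /=.
have -> : count (fun w => w != u) s = count (predC (pred1 u)) s by [].
by rewrite -[X in (X < _)%N]add0n ltn_add2r.
Qed.

Lemma lagr_self (s : seq R) (u : R) : lagr s u u = 1.
Proof. by rewrite /lagr big1 // => w wu; rewrite divff // subr_eq0 eq_sym. Qed.

Lemma lagr_other (s : seq R) (u w : R) : w \in s -> u != w -> lagr s u w = 0.
Proof.
move=> ws uw; apply/eqP; rewrite /lagr prodf_seq_eq0; apply/hasP; exists w => //.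
by rewrite eq_sym uw subrr mul0r eqxx.
Qed.

Lemma interp (s : seq R) (p : {poly R}) : uniq s -> (size p <= size s)%N ->
  forall t, p.[t] = \sum_(u <- s) p.[u] * lagr s u t.
Proof.
move=> us sp.
set q := p - \sum_(u <- s) p.[u] *: LP s u.
suff q0 : q = 0.
  move=> t; have := congr1 (fun r => r.[t]) q0.
  rewrite /q hornerD hornerN horner_sum horner0 => /eqP; rewrite subr_eq0 => /eqP ->.
  by apply: eq_bigr => u _; rewrite hornerZ LP_horner.
apply: (roots_geq_poly_eq0 _ us).
- apply/allP => w ws; rewrite /root /q hornerD hornerN horner_sum.
  rewrite (bigD1_seq w) //= hornerZ LP_horner lagr_self mulr1.
  rewrite big1 ?addr0 ?subrr // => u uw.
  by rewrite hornerZ LP_horner lagr_other ?mulr0.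
- rewrite /q; apply: leq_trans (size_polyD _ _) _; rewrite geq_max sp size_polyN.
  rewrite big_seq; apply: (big_ind (fun r : {poly R} => size r <= size s)%N).
  + by rewrite size_poly0.
  + by move=> a b ha hb; apply: leq_trans (size_polyD _ _) _; rewrite geq_max ha hb.
  + by move=> u us'; apply: leq_trans (size_scale_leq _ _) _; apply: size_LP.
Qed.

Lemma count_neq (n : nat) (k : 'I_n.+1) :
  count (fun j => j != k) (index_enum 'I_n.+1) = n.
Proof.
rewrite -sum1_count sum1dep_card.
have -> : [set x | x != k] = [set~ k] by apply/setP => j; rewrite !inE.
by rewrite cardsC1 card_ord.
Qed.

Definition LQ (n : nat) (xh : 'I_n.+1 -> R) (k : 'I_n.+1) : {poly R} :=
  (\prod_(j < n.+1 | j != k) (xh k - xh j)^-1) *: \prod_(j < n.+1 | j != k) ('X - (xh j)%:P).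

Definition PP (n : nat) (xh v : 'I_n.+1 -> R) : {poly R} :=
  \sum_(k < n.+1) v k *: LQ xh k.

Lemma PP_horner (n : nat) (xh v : 'I_n.+1 -> R) t : (PP xh v).[t] = Pint xh v t.
Proof.
rewrite /PP /Pint horner_sum; apply: eq_bigr => k _.
rewrite hornerZ /LQ hornerZ horner_prod -big_split /=; congr (_ * _).
by apply: eq_bigr => j _; rewrite hornerXsubC mulrC.
Qed.

Lemma size_PP (n : nat) (xh v : 'I_n.+1 -> R) : (size (PP xh v) <= n.+1)%N.
Proof.
rewrite /PP; apply: (big_ind (fun r : {poly R} => size r <= n.+1)%N).
- by rewrite size_poly0.
- by move=> a b ha hb; apply: leq_trans (size_polyD _ _) _; rewrite geq_max ha hb.
- move=> k _; apply: leq_trans (size_scale_leq _ _) _.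
  apply: leq_trans (size_scale_leq _ _) _.
  by rewrite -big_filter size_prod_XsubC size_filter count_neq.
Qed.

Definition EP (n : nat) (xh y z : 'I_n.+1 -> R) : {poly R} :=
  PP xh (fun k => y k * z k) - PP xh y * PP xh z.

Lemma EP_horner (n : nat) (xh y z : 'I_n.+1 -> R) t :
  (EP xh y z).[t] = Eerr xh y z t.
Proof. by rewrite /EP hornerD hornerN hornerM !PP_horner. Qed.

Lemma size_EP (n : nat) (xh y z : 'I_n.+1 -> R) : (size (EP xh y z) <= (n + n).+1)%N.
Proof.
rewrite /EP; apply: leq_trans (size_polyD _ _) _; rewrite geq_max size_polyN.
apply/andP; split; first by apply: leq_trans (size_PP _ _) _; rewrite ltnS leq_addr.
apply: leq_trans (size_mul_leq _ _) _.
have h1 := size_PP xh y; have h2 := size_PP xh z.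
move: h1 h2; set a := size _; set b := size _; clearbody a b. lia.
Qed.

Lemma incr_le (n : nat) (xh : 'I_n.+1 -> R) : strictly_incr xh ->
  forall i j : 'I_n.+1, (i <= j)%N -> xh i <= xh j.
Proof.
move=> h i j; rewrite leq_eqVlt => /orP[/eqP e|lt]; last exact/ltW/h.
by rewrite (val_inj e).
Qed.

Lemma incr_inj (n : nat) (xh : 'I_n.+1 -> R) : strictly_incr xh -> injective xh.
Proof.
move=> h i j e; apply/eqP; case: (ltngtP i j) => [lt|lt|/val_inj -> //].
- by have := h _ _ lt; rewrite e ltxx.
- by have := h _ _ lt; rewrite e ltxx.
Qed.

Lemma Pint_node (n : nat) (xh v : 'I_n.+1 -> R) i : strictly_incr xh ->
  Pint xh v (xh i) = v i.
Proof.
move=> h; rewrite /Pint (bigD1 i) //=.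
rewrite [X in _ + X]big1; last first.
  by move=> k ki; rewrite (bigD1 i) 1?eq_sym //= subrr mul0r mul0r mulr0.
rewrite addr0 big1 ?mulr1 // => j ji; rewrite divff // subr_eq0.
by apply/eqP => /(incr_inj h) e; move: ji; rewrite e eqxx.
Qed.

Lemma Eerr_node (n : nat) (xh y z : 'I_n.+1 -> R) i : strictly_incr xh ->
  Eerr xh y z (xh i) = 0.
Proof. by move=> h; rewrite /Eerr !Pint_node // subrr. Qed.

Lemma cmid_bounds (n : nat) (xh : 'I_n.+1 -> R) : strictly_incr xh ->
  forall k : 'I_n, xh (inord k) < cmid xh k /\ cmid xh k < xh (inord k.+1).
Proof.
move=> h k; have hk : xh (inord k) < xh (inord k.+1).
  have k1 : (k < n.+1)%N by apply: leq_trans (ltn_ord k) _.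
  have k2 : (k.+1 < n.+1)%N by rewrite ltnS.
  by apply: h; rewrite !inordK.
rewrite /cmid; split; lra.
Qed.

Lemma size_vhat (n : nat) (xh : 'I_n.+1 -> R) : size (vhat xh) = (n + n).+1.
Proof. rewrite /vhat size_cat !size_map -!enumT !size_enum_ord addSn. done. Qed.

Lemma uniq_vhat (n : nat) (xh : 'I_n.+1 -> R) : strictly_incr xh -> uniq (vhat xh).
Proof.
move=> h; have hb := cmid_bounds h; have hl := incr_le h.
rewrite /vhat cat_uniq; apply/and3P; split.
- by rewrite map_inj_uniq ?enum_uniq //; apply: incr_inj.
- apply/hasPn => c /mapP [k _ ->]; apply/negP => /mapP [j _ e].
  have [a b] := hb k.
  case: (leqP j k) => jk.
  + have : xh j <= xh (inord k) by apply: hl; rewrite inordK //; apply: leq_trans (ltn_ord k) _.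
    move=> hj; lra.
  + have : xh (inord k.+1) <= xh j by apply: hl; rewrite inordK // ltnS.
    move=> hj; lra.
- rewrite map_inj_uniq ?enum_uniq // => k l e; apply/eqP.
  case: (ltngtP k l) => [lt|lt|/val_inj -> //].
  + have [a b] := hb k; have [c d] := hb l.
    have : xh (inord k.+1) <= xh (inord l).
      by apply: hl; rewrite !inordK //; apply: leq_trans (ltn_ord _) _.
    move=> hj; lra.
  + have [a b] := hb k; have [c d] := hb l.
    have : xh (inord l.+1) <= xh (inord k).
      by apply: hl; rewrite !inordK //; apply: leq_trans (ltn_ord _) _.
    move=> hj; lra.
Qed.

Lemma lagr_bound (s : seq R) (u a b t : R) : a <= t <= b ->
  `|lagr s u t| <= \prod_(w <- s | w != u) ((`|a| + `|b| + `|w|) * `|u - w|^-1).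
Proof.
move=> /andP[ha hb].
have tb : `|t| <= `|a| + `|b|.
  have := ler_norm b; have := ler_norm (-a); rewrite normrN.
  have := normr_ge0 a; have := normr_ge0 b.
  case: (lerP 0 t) => h0 h1 h2 h3 h4.
  - rewrite ger0_norm //; lra.
  - rewrite ltr0_norm //; lra.
rewrite /lagr normr_prod; apply: ler_prod => w _; apply/andP; split => //.
rewrite normrM normfV; apply: ler_wpM2r; first by rewrite invr_ge0.
apply: le_trans (ler_normB _ _) _; lra.
Qed.

Lemma Leb_ge (s : seq R) (a b t : R) : a <= t <= b ->
  \sum_(u <- s) `|lagr s u t| <= Lebesgue a b s.
Proof.
move=> ht; apply: ub_le_sup; last by exists t.
exists (\sum_(u <- s) \prod_(w <- s | w != u) ((`|a| + `|b| + `|w|) * `|u - w|^-1)).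
move=> r [t' ht' <-]; apply: ler_sum => u _; exact: lagr_bound.
Qed.
End Aux.

Theorem lemma3 (R : realType) (n : nat) (x xh y : 'I_n.+1 -> R) :
  strictly_incr x -> strictly_incr xh ->
  xh ord0 = x ord0 -> xh ord_max = x ord_max ->
  forall t : R, x ord0 <= t <= x ord_max ->
    `|Eerr xh y (zvec x xh) t|
      <= Lebesgue (x ord0) (x ord_max) (vhat xh)
         * \big[Num.max/0]_(k < n) `|Eerr xh y (zvec x xh) (cmid xh k)|.
Proof.
move=> hx hxh h0 hn t ht.
set z := zvec x xh; set e := Eerr xh y z; set s := vhat xh.
set M := \big[Num.max/0]_(k < n) `|e (cmid xh k)|.
have M0 : 0 <= M.
  rewrite /M; apply: (big_ind (fun r => 0 <= r)) => // a b ha hb.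
  by rewrite le_max ha.
have eM : forall u, u \in s -> `|e u| <= M.
  move=> u; rewrite mem_cat => /orP[/mapP[k _ ->]|/mapP[k _ ->]].
  - by rewrite /e Eerr_node // normr0.
  - exact: (le_bigmax 0 (fun k => `|e (cmid xh k)|) k).
have et : e t = \sum_(u <- s) e u * lagr s u t.
  rewrite /e -EP_horner (interp (uniq_vhat hxh)); last by rewrite size_vhat size_EP.
  by apply: eq_bigr => u _; rewrite EP_horner.
rewrite et; apply: le_trans (ler_norm_sum _ _ _) _.
apply: (@le_trans _ _ (\sum_(u <- s) M * `|lagr s u t|)).
  rewrite big_seq_cond [X in _ <= X]big_seq_cond; apply: ler_sum => u /andP[us _].
  by rewrite normrM; apply: ler_wpM2r => //; exact: eM.
rewrite -mulr_sumr mulrC; apply: ler_wpM2r => //.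
exact: Leb_ge.
Qed.
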